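(* Let $K$ be a number field, let $X\subseteq M_d(K)$ be closed in the linear Zariski topology, and let $\mathcal S=\langle X\rangle$. Let $r\ge0$ and let $Y,T\subseteq M_d(K)$ be closed sets such that $X\cup\{B\in\mathcal S:\operatorname{rank}(B)>r\}\subseteq Y$, and set $Y'\coloneqq\overline{(Y\cup T)^{\le 2\binom{d}{r}+3}}$. If there exists $A=A_1\cdots A_n\in\mathcal S\setminus Y'$ with $A_1,\ldots,A_n\in X$ and $\operatorname{rank}(A)\ge r$, then there exist $k<l$ such that the subproduct $A'=A_k\cdots A_l$ is completely pseudo-regular of rank $r$ and not contained in $Y\cup T$.
   Context: The linear Zariski topology on $M_d(K)$ has as closed sets the finite unions of vector subspaces, and $\overline{\,\cdot\,}$ denotes closure in it. $\langle X\rangle$ is the subsemigroup generated by $X$. For $Z\subseteq M_d(K)$ and $n\ge1$, $Z^{\le n}=\{C_1\cdots C_k: k\in[1,n], C_1,\ldots,C_k\in Z\}$. A matrix $C$ is completely pseudo-regular if it lies in a subgroup of the multiplicative semigroup $M_d(K)$ (equivalently $\operatorname{im}C\cap\ker C=0$). *)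

(* Defs.v *)
From HB Require Import structures.
From mathcomp Require Import all_boot all_order all_algebra all_field.
Set Implicit Arguments. Unset Strict Implicit. Unset Printing Implicit Defensive.
Import GRing.Theory.
Local Open Scope ring_scope.

Section Defs.
Variables (K : fieldType) (d : nat).

Definition mxset := 'M[K]_d -> Prop.

(* A vector subspace of M_d(K) is encoded (via mxvec) as the row space of a
   matrix V : 'M_(d*d); A belongs to it iff (mxvec A <= V)%MS. *)
Definition in_subspace (V : 'M[K]_(d * d)) (A : 'M[K]_d) : bool :=
  (mxvec A <= V)%MS.

(* linear Zariski topology: closed sets = finite unions of subspaces *)
Definition lz_closed (Z : mxset) : Prop :=
  exists s : seq 'M[K]_(d * d), forall A, Z A <-> has (fun V => in_subspace V A) s.

Definition lz_closure (Z : mxset) : mxset :=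
  fun A => forall C : mxset, lz_closed C -> (forall B, Z B -> C B) -> C A.

Definition mprod (s : seq 'M[K]_d) : 'M[K]_d := foldr (fun A B => A *m B) 1%:M s.

Definition gen_semigroup (X : mxset) : mxset :=
  fun A => exists s : seq 'M[K]_d, [/\ s <> [::], forall B, B \in s -> X B & A = mprod s].

Definition pow_le (Z : mxset) (n : nat) : mxset :=
  fun A => exists s : seq 'M[K]_d,
    [/\ (1 <= size s)%N, (size s <= n)%N, forall B, B \in s -> Z B & A = mprod s].

(* C lies in a subgroup of the multiplicative semigroup M_d(K) *)
Definition compl_pseudo_regular (C : 'M[K]_d) : Prop :=
  exists (H : mxset) (E : 'M[K]_d),
    [/\ H C, H E,
        forall x y, H x -> H y -> H (x *m y),
        forall x, H x -> E *m x = x /\ x *m E = x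
      & forall x, H x -> exists y, [/\ H y, x *m y = E & y *m x = E]].

End Defs.

(* Main.v *)
Require Import Defs.
From HB Require Import structures.
From mathcomp Require Import all_boot all_order all_algebra all_field all_fingroup.
From mathcomp Require Import zify.
From Stdlib Require Import Classical.
Import GRing.Theory.
Local Open Scope ring_scope.

Lemma det_expand (K : fieldType) r d (G : 'M[K]_(r,d)) (F : 'M[K]_(d,r)) :
  \det (G *m F) = \sum_(f : {ffun 'I_r -> 'I_d}) (\prod_i G i (f i)) * \det (rowsub f F).
Proof.
transitivity (\sum_(s : perm.perm_of 'I_r) \sum_(f : {ffun 'I_r -> 'I_d})
   (-1) ^+ s * ((\prod_i G i (f i)) * \prod_i F (f i) (s i))).
  apply: eq_bigr => s _; rewrite -mulr_sumr; congr (_ * _).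
  rewrite (eq_bigr (fun i => \sum_k G i k * F k (s i))); last by move=> i _; rewrite mxE.
  rewrite bigA_distr_bigA; apply: eq_bigr => f _; by rewrite big_split.
rewrite exchange_big; apply: eq_bigr => f _.
rewrite /determinant mulr_sumr; apply: eq_bigr => s _.
rewrite mulrCA; congr (_ * (_ * _)); apply: eq_bigr => i _; by rewrite mxE.
Qed.

Section CB.
Variables (K : fieldType) (r d : nat).
Definition Pr := [set S : {set 'I_d} | #|S| == r].
Definition imf (f : {ffun 'I_r -> 'I_d}) : {set 'I_d} := f @: [set: 'I_r].
Definition repr_of (S : {set 'I_d}) : option {ffun 'I_r -> 'I_d} :=
  [pick g : {ffun 'I_r -> 'I_d} | injectiveb g && (imf g == S)].
Definition Dv (F : 'M[K]_(d,r)) S :=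
  if repr_of S is Some g then \det (rowsub g F) else 0.
Definition Pimx (f g : {ffun 'I_r -> 'I_d}) : 'M[K]_r :=
  \matrix_(i, j) ((f i == g j)%:R).
Definition cf (G : 'M[K]_(r,d)) (f : {ffun 'I_r -> 'I_d}) :=
  if injectiveb f then
    (if repr_of (imf f) is Some g then (\prod_i G i (f i)) * \det (Pimx f g) else 0)
  else 0.

Lemma rowsub_perm (f g : {ffun 'I_r -> 'I_d}) (F : 'M[K]_(d,r)) : injective g -> imf f = imf g ->
  rowsub f F = Pimx f g *m rowsub g F.
Proof.
move=> ig E; apply/matrixP => i c; rewrite !mxE.
have : f i \in imf g by rewrite -E; apply: imset_f; rewrite inE.
case/imsetP => j0 _ Hj0.
rewrite (bigD1 j0) //= !mxE Hj0 eqxx mul1r big1 ?addr0 // => j Hj.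
rewrite !mxE Hj0; case: eqP => [/ig Ej|_]; last by rewrite mul0r.
by rewrite Ej eqxx in Hj.
Qed.

Lemma term_eq (G : 'M[K]_(r,d)) F (f : {ffun 'I_r -> 'I_d}) :
  (\prod_i G i (f i)) * \det (rowsub f F) = cf G f * Dv F (imf f).
Proof.
rewrite /cf /Dv /repr_of; case: (boolP (injectiveb f)) => [injf|ninjf].
  case: pickP => [g /andP [ig /eqP Eg]|none].
    rewrite (rowsub_perm _ _ F (injectiveP _ ig) (esym Eg)) det_mulmx mulrA //.
  by move: (none f); rewrite injf eqxx.
rewrite mul0r; case/injectivePn: ninjf => i1 [i2 Hne Heq].
rewrite (determinant_alternate Hne) ?mulr0 // => c; by rewrite !mxE Heq.
Qed.

Lemma card_imf (f : {ffun 'I_r -> 'I_d}) : injectiveb f -> #|imf f| = r.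
Proof. by move/injectiveP => inj; rewrite /imf card_imset // cardsT card_ord. Qed.

Lemma CB (G : 'M[K]_(r,d)) F :
  \det (G *m F) = \sum_(S in Pr) (\sum_(f | imf f == S) cf G f) * Dv F S.
Proof.
rewrite det_expand; under eq_bigr do rewrite term_eq.
rewrite (bigID (fun f : {ffun 'I_r -> 'I_d} => injectiveb f)) /= [X in _ + X]big1 ?addr0; last first.
  by move=> f /negbTE nf; rewrite /cf nf mul0r.
rewrite (partition_big imf (fun S => S \in Pr)) /=; last first.
  by move=> f inj; rewrite inE card_imf.
apply: eq_bigr => S _; rewrite mulr_suml.
rewrite [RHS](bigID (fun f : {ffun 'I_r -> 'I_d} => injectiveb f)) /= [X in _ = _ + X]big1 ?addr0; last first.
  by move=> f /andP [_ /negbTE nf]; rewrite /cf nf mul0r.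
apply: eq_big => [f|f /andP [_ /eqP ->]] //; by rewrite andbC.
Qed.

Lemma CBmat : exists (u : 'M[K]_(r,d) -> 'I_#|Pr| -> K) (v : 'M[K]_(d,r) -> 'I_#|Pr| -> K),
  forall G F, \det (G *m F) = \sum_k u G k * v F k.
Proof.
exists (fun G k => \sum_(f | imf f == enum_val k) cf G f), (fun F k => Dv F (enum_val k)).
by move=> G F; rewrite CB big_enum_val.
Qed.
End CB.

Set Implicit Arguments. Unset Strict Implicit.

Section Main.
Variables (K : fieldType) (d : nat) (As : seq 'M[K]_d).
Local Notation n := (size As).
Definition seg i j := mprod (drop i (take j As)).

Lemma mprod_cat (s1 s2 : seq 'M[K]_d) : mprod (s1 ++ s2) = mprod s1 *m mprod s2.
Proof.
rewrite /mprod; elim: s1 => [|a s IH] /=; first by rewrite mul1mx.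
by rewrite IH mulmxA.
Qed.

Lemma seg_split i j k : (i <= j)%N -> (j <= k)%N -> (k <= n)%N ->
  seg i k = seg i j *m seg j k.
Proof.
move=> ij jk kn; rewrite /seg -mprod_cat; congr mprod.
rewrite -{1}(cat_take_drop j (take k As)) take_takel //.
have sz : size (take j As) = j by rewrite size_takel // (leq_trans jk).
case: (ltnP i j) => [lt|ge]; first by rewrite drop_cat sz lt.
have -> : i = j by lia.
by rewrite drop_size_cat // [drop j (take j As)]drop_oversize ?sz.
Qed.

Lemma seg_full : seg 0 n = mprod As.
Proof. by rewrite /seg drop0 take_size. Qed.

Lemma seg_single i : (i < n)%N -> exists a, a \in As /\ seg i i.+1 = a.
Proof.
move=> lt; rewrite /seg (drop_nth 0) ?size_takel // drop_oversize ?size_takel //.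
rewrite nth_take //; exists (nth 0 As i); split; first exact: mem_nth.
by rewrite /mprod /= mulmx1.
Qed.

Lemma seg_gen (X : mxset K d) i j : (forall B, B \in As -> X B) -> (i < j)%N -> (j <= n)%N ->
  gen_semigroup X (seg i j).
Proof.
move=> AX ij jn; exists (drop i (take j As)); split => //.
  move/(congr1 size); rewrite size_drop size_takel //=; lia.
by move=> B /mem_drop /mem_take /AX.
Qed.

Lemma rk_seg i j : (i <= j)%N -> (j <= n)%N -> (\rank (mprod As) <= \rank (seg i j))%N.
Proof.
move=> ij jn; rewrite -seg_full (@seg_split 0%N i n) // ?(leq_trans ij) //.
rewrite (@seg_split i j n) //.
apply: leq_trans (mxrankM_maxr _ _) _; exact: mxrankM_maxl.
Qed.

End Main.

Section CPR.
Variables (K : fieldType) (d : nat).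

Lemma cpr_fact m (F : 'M[K]_(d,m)) (G : 'M[K]_(m,d)) : row_full F -> row_free G ->
  \rank ((F *m G) *m (F *m G)) = m -> compl_pseudo_regular (F *m G).
Proof.
move=> fF fG rkCC; set C := F *m G; set M := G *m F.
have rkM : \rank M = m.
  have CC : C *m C = F *m M *m G by rewrite /C /M !mulmxA.
  by rewrite -[X in _ = X]rkCC CC mxrankMfree // (eqmxMfull _ fF).
have Mu : M \in unitmx by rewrite -row_free_unit /row_free rkM.
set Mi := invmx M.
have key : forall X Y : 'M[K]_m, (F *m X *m G) *m (F *m Y *m G) = F *m (X *m M *m Y) *m G.
  by move=> X Y; rewrite /M !mulmxA.
have C1 : C = F *m 1%:M *m G by rewrite mulmx1.
clearbody C.
set E := F *m Mi *m G; set W := F *m (Mi *m Mi) *m G.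
have MiM : Mi *m M = 1%:M by rewrite mulVmx.
have MMi : M *m Mi = 1%:M by rewrite mulmxV.
have EE : E *m E = E by rewrite key MiM mul1mx.
have EC : E *m C = C by rewrite C1 key MiM !mul1mx.
have CE : C *m E = C by rewrite C1 key mul1mx MMi.
have EW : E *m W = W by rewrite key MiM mul1mx.
have WE : W *m E = W by rewrite key -[Mi *m Mi *m M]mulmxA MiM mulmx1.
have CW : C *m W = E by rewrite C1 key mul1mx [M *m _]mulmxA MMi mul1mx.
have WC : W *m C = E by rewrite C1 key mulmx1 -[Mi *m Mi *m M]mulmxA MiM mulmx1.
exists (fun Z => [/\ E *m Z = Z, Z *m E = Z & exists Y, [/\ E *m Y = Y, Y *m E = Y, Z *m Y = E & Y *m Z = E]]), E.
split.
- by split => //; exists W.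
- by split => //; exists E.
- move=> x y [Ex xE [x' [Ex' x'E xx' x'x]]] [Ey yE [y' [Ey' y'E yy' y'y]]].
  split; [by rewrite mulmxA Ex | by rewrite -mulmxA yE|].
  exists (y' *m x'); split.
  + by rewrite mulmxA Ey'.
  + by rewrite -mulmxA x'E.
  + by rewrite -mulmxA [y *m _]mulmxA yy' Ex' xx'.
  + by rewrite -mulmxA [x' *m _]mulmxA x'x Ey y'y.
- by move=> x [Ex xE _].
- move=> x [Ex xE [y [Ey yE xy yx]]]; exists y; split => //; split => //; by exists x.
Qed.

Lemma cpr_of (C : 'M[K]_d) : \rank (C *m C) = \rank C -> compl_pseudo_regular C.
Proof.
move=> rkCC; rewrite -(mulmx_base C); apply: cpr_fact.
- exact: col_base_full.
- exact: row_base_free.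
by rewrite mulmx_base.
Qed.

Lemma LR_exists r (A : 'M[K]_d) : (r <= \rank A)%N ->
  exists (L : 'M[K]_(r,d)) (R : 'M[K]_(d,r)), L *m A *m R \in unitmx.
Proof.
move=> rA; exists (pid_mx r *m invmx (col_ebase A)), (invmx (row_ebase A) *m pid_mx r).
have eA := mulmx_ebase A; have cu := col_ebase_unit A; have ru := row_ebase_unit A.
set ce := col_ebase A in eA cu *; set re := row_ebase A in eA ru *.
rewrite -eA !mulmxA -[pid_mx r *m invmx ce *m ce]mulmxA mulVmx // mulmx1.
rewrite -[_ *m re *m invmx re]mulmxA mulmxV // mulmx1.
have rd : (\rank A <= d)%N by exact: rank_leq_col.
rewrite !mul_pid_mx.
have -> : minn d (minn (minn d (minn r (\rank A))) r) = r by lia.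
by rewrite pid_mx_1 unitmx1.
Qed.
End CPR.

Lemma det0_rank (K : fieldType) r (Z : 'M[K]_r) : (\rank Z < r)%N -> \det Z = 0.
Proof.
move=> rk; apply/eqP; apply: contraTT rk => nz; rewrite -leqNgt.
have : Z \in unitmx by rewrite unitmxE unitfE.
by rewrite -row_free_unit /row_free => /eqP ->.
Qed.

Section Clique.
Variables (K : fieldType) (d : nat) (As : seq 'M[K]_d) (r : nat).
Local Notation n := (size As).
Local Notation seg := (@seg K d As).
Definition good i j : bool :=
  (j == i.+1) || (r < \rank (seg i j))%N || (r <= \rank (seg i j *m seg i j))%N.
Definition Rb a b := (a < b)%N && ~~ good a b.

Lemma clique (x : seq nat) : (r <= \rank (mprod As))%N -> pairwise Rb x ->
  all (fun y => y <= n)%N x -> (size x <= 'C(d, r))%N.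
Proof.
move=> rA pw alln.
case: (posnP r) => [r0|rpos].
  rewrite r0 bin0; case: x pw alln => [|a [|b x]] //=.
  case/andP => /andP [/andP [_ bad] _] _; move: bad; by rewrite /good r0 leq0n !orbT.
have [L [R LAR]] := LR_exists rA.
have [u [v CBe]] := CBmat K r d.
set p := size x.
pose xs (s : 'I_p) := nth 0%N x s.
pose Gm : 'M[K]_p := \matrix_(s, t) \det ((L *m seg 0 (xs t)) *m (seg (xs s) n *m R)).
have xsn s : (xs s <= n)%N by apply: (all_nthP 0%N alln); exact: ltn_ord.
have pwx (s t : 'I_p) : (s < t)%N -> Rb (xs s) (xs t).
  by move=> st; apply: (pairwiseP 0%N pw) => //; rewrite inE ltn_ord.
have trig : is_trig_mx Gm.
  apply/is_trig_mxP => s t st; rewrite mxE.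
  have /andP [lt bad] := pwx s t st.
  have e : (L *m seg 0 (xs t)) *m (seg (xs s) n *m R) =
     (L *m seg 0 (xs s)) *m (seg (xs s) (xs t) *m seg (xs s) (xs t)) *m (seg (xs t) n *m R).
    rewrite (@seg_split _ _ As 0 (xs s) (xs t) (leq0n _) (ltnW lt) (xsn t)).
    rewrite (@seg_split _ _ As (xs s) (xs t) n (ltnW lt) (xsn t) (leqnn _)).
    by rewrite !mulmxA.
  rewrite e; apply: det0_rank.
  apply: leq_ltn_trans (mxrankM_maxl _ _) _; apply: leq_ltn_trans (mxrankM_maxr _ _) _.
  by move: bad; rewrite /good !negb_or => /andP [_]; rewrite ltnNge.
have diag (s : 'I_p) : Gm s s != 0.
  rewrite mxE -mulmxA [seg _ _ *m (_ *m R)]mulmxA.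
  rewrite -(@seg_split _ _ As 0 (xs s) n (leq0n _) (xsn s) (leqnn _)) seg_full mulmxA.
  by move: LAR; rewrite unitmxE unitfE.
have uGm : Gm \in unitmx.
  by rewrite unitmxE unitfE det_trig //; apply/prodf_neq0 => s _.
have fact : Gm = \matrix_(s, k) v (seg (xs s) n *m R) k *m \matrix_(k, t) u (L *m seg 0 (xs t)) k.
  apply/matrixP => s t; rewrite !mxE CBe; apply: eq_bigr => k _; by rewrite !mxE mulrC.
have : (\rank Gm <= #|Pr r d|)%N.
  by rewrite fact; apply: leq_trans (mxrankM_maxl _ _) _; exact: rank_leq_col.
move: uGm; rewrite -row_free_unit /row_free => /eqP ->.
by rewrite /Pr card_draws card_ord.
Qed.
End Clique.

Lemma mprod_cons (K : fieldType) d (a : 'M[K]_d) s : mprod (a :: s) = a *m mprod s.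
Proof. by []. Qed.

Section Greedy.
Variables (K : fieldType) (d : nat) (As : seq 'M[K]_d) (r : nat) (YT : 'M[K]_d -> Prop).
Local Notation n := (size As).
Local Notation seg := (@seg K d As).
Hypothesis goodYT : forall i j, (i < j)%N -> (j <= n)%N -> good As r i j -> YT (seg i j).

Lemma greedy p : forall i, (i < n)%N ->
  (exists s : seq 'M[K]_d, [/\ (1 <= size s)%N, (size s <= (2 * p).-1)%N,
      (forall B, B \in s -> YT B) & mprod s = seg i n])
  \/ (exists x : seq nat, [/\ size x = p, pairwise (Rb As r) (i :: x) &
      all (fun y => y <= n)%N x]).
Proof.
elim: p => [|p IH] i ilt; first by right; exists [::].
have exj : exists q, (i < q <= n)%N && good As r i q.
  by exists i.+1; rewrite ltnSn ilt /good eqxx.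
have ubj : forall q, (i < q <= n)%N && good As r i q -> (q <= n)%N.
  by move=> q /andP [/andP [_ ->]].
case: (ex_maxnP exj ubj) => j /andP [/andP [ij jn] gij] jmax.
have badi : forall y, (j < y)%N -> (y <= n)%N -> Rb As r i y.
  move=> y jy yn; rewrite /Rb (ltn_trans ij jy) /=; apply/negP => g.
  have := jmax y; rewrite (ltn_trans ij jy) yn g => /(_ isT).
  by rewrite leqNgt jy.
have Yij : YT (seg i j) by apply: goodYT.
have [jn'|jlt] : j = n \/ (j < n)%N by lia.
  left; exists [:: seg i n]; split => /=.
  - by [].
  - rewrite /=; lia.
  - by move=> B; rewrite inE => /eqP ->; rewrite -jn'.
  - by rewrite /mprod /= mulmx1.
have exk : exists q, (j < q <= n)%N && good As r j q.
  by exists j.+1; rewrite ltnSn jlt /good eqxx.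
have ubk : forall q, (j < q <= n)%N && good As r j q -> (q <= n)%N.
  by move=> q /andP [/andP [_ ->]].
case: (ex_maxnP exk ubk) => k /andP [/andP [jk kn] gjk] _.
have Yjk : YT (seg j k) by apply: goodYT.
have [kn'|klt] : k = n \/ (k < n)%N by lia.
  case: p IH => [|p] IH.
    right; exists [:: n]; split => //=; rewrite ?leqnn ?andbT ?badi //.
  left; exists [:: seg i j; seg j n]; split => /=.
  - by [].
  - rewrite /=; lia.
  - by move=> B; rewrite !inE => /orP [] /eqP ->; rewrite -?kn'.
  - rewrite /mprod /= mulmx1.
    by rewrite -(@seg_split _ _ As i j n (ltnW ij) (ltnW jlt) (leqnn _)).
have [[s' [s1 s2 s3 s4]] | [x [sx pwx allx]]] := IH k klt.
  left; exists [:: seg i j, seg j k & s']; split.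
  - by [].
  - rewrite /=; lia.
  - by move=> B; rewrite !inE => /orP [/eqP -> // | /orP [/eqP -> // | /s3]].
  - rewrite !mprod_cons s4 mulmxA -(@seg_split _ _ As i j k (ltnW ij) (ltnW jk) (ltnW klt)).
    by rewrite -(@seg_split _ _ As i k n (ltnW (ltn_trans ij jk)) (ltnW klt) (leqnn _)).
right; exists (k :: x); split => //=.
  - by rewrite sx.
  - move: pwx => /= /andP [allk pwx'].
    apply/and3P; split => //; apply/andP; split; first by apply: badi => //; exact: ltnW klt.
    apply/allP => y yx.
    have /andP [ky _] := allP allk y yx.
    apply: badi; first exact: ltn_trans jk ky.
    exact: (allP allx y yx).
  - by rewrite (ltnW klt).
Qed.
End Greedy.

Unset Implicit Arguments. Set Strict Implicit.

Theorem lemmaV15 (K : fieldExtType rat) (d : nat) (X Y T : 'M[K]_d -> Prop) (r : nat)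
    (As : seq 'M[K]_d) :
  lz_closed X -> lz_closed Y -> lz_closed T ->
  (forall B, X B -> Y B) ->
  (forall B, gen_semigroup X B -> (r < \rank B)%N -> Y B) ->
  As <> [::] -> (forall B, B \in As -> X B) ->
  ~ lz_closure (pow_le (fun B => Y B \/ T B) (2 * 'C(d, r) + 3)) (mprod As) ->
  (r <= \rank (mprod As))%N ->
  exists k l : nat,
    [/\ (k < l)%N, (l < size As)%N,
        compl_pseudo_regular (mprod (drop k (take l.+1 As))),
        \rank (mprod (drop k (take l.+1 As))) = r
      & ~ (Y (mprod (drop k (take l.+1 As))) \/ T (mprod (drop k (take l.+1 As))))].
Proof.
move=> _ _ _ XY SY Ane AX notcl rA.
apply: NNPP => H.
have n0 : (0 < size As)%N by rewrite lt0n size_eq0; apply/eqP.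
have goodYT : forall i j, (i < j)%N -> (j <= size As)%N -> good As r i j ->
    Y (seg As i j) \/ T (seg As i j).
  move=> i j ij jn; rewrite /good.
  case: (eqVneq j i.+1) => [-> _| ne] /=.
    have [a [aA ->]] := seg_single (leq_trans ij jn).
    by left; apply: XY; exact: AX.
  have rC := rk_seg (ltnW ij) jn.
  case: (ltnP r (\rank (seg As i j))) => [rlt _|rle] /=.
    by left; apply: SY => //; exact: seg_gen.
  move=> h.
  have rkC : \rank (seg As i j) = r by lia.
  have rkCC : \rank (seg As i j *m seg As i j) = \rank (seg As i j).
    have := mxrankM_maxl (seg As i j) (seg As i j); lia.
  case: (classic (Y (seg As i j) \/ T (seg As i j))) => // nYT; exfalso; apply: H.
  have ne2 : j <> i.+1 by apply/eqP.
  have ej : (j.-1).+1 = j by lia.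
  exists i, j.-1; rewrite ej; split => //; [lia | exact: cpr_of].
have [[s [s1 s2 s3 s4]] | [x [sx pwx allx]]] := @greedy _ _ As r (fun B => Y B \/ T B) goodYT ('C(d, r)) 0%N n0.
  apply: notcl => Cl clC sub; apply: sub; exists s; split => //; first lia.
  by rewrite s4 seg_full.
have := clique rA pwx; rewrite /= allx sx => /(_ isT).
by rewrite ltnn.
Qed.
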